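(* In the monoid $M_n^+$ (defined in the context), with $\delta\equiv a_{n(n-1)}a_{(n-1)(n-2)}\cdots a_{21}$, the following positive equalities hold: $$a_{ts}\delta\doteq\delta a_{(t+1)(s+1)}\ \text{ and }\ b_{ts}\delta\doteq\delta b_{(t+1)(s+1)}\quad\text{for } 1\le s<t<n,$$ $$a_{ns}\delta\doteq\delta a_{(s+1)1}\ \text{ and }\ b_{ns}\delta\doteq\delta b_{(s+1)1}\quad\text{for } 1\le s<n.$$
   Context: Fix $n\ge 2$. Let $M_n^+$ be the monoid with generators $a_{ts}$ and $b_{ts}$ for $1\le s<t\le n$ and relations: $a_{ts}a_{rq}=a_{rq}a_{ts}$, $a_{ts}b_{rq}=b_{rq}a_{ts}$ and $b_{ts}b_{rq}=b_{rq}b_{ts}$ whenever $(t-r)(t-q)(s-r)(s-q)>0$; $a_{ts}a_{sr}=a_{tr}a_{ts}=a_{sr}a_{tr}$ for $1\le r<s<t\le n$; $a_{ts}b_{ts}=b_{ts}a_{ts}$ for $1\le s<t\le n$; $a_{ts}b_{sr}=b_{tr}a_{ts}$, $a_{sr}b_{tr}=b_{ts}a_{sr}$ and $a_{tr}b_{ts}=b_{sr}a_{tr}$ for $1\le r<s<t\le n$. (This is the positive singular braid monoid in Birman–Ko–Lee type generators.) For words $A,B$ in these generators, $A\doteq B$ means they represent the same element of $M_n^+$. *)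

(* Defs.v *)
From Stdlib Require Import List Arith ZArith Lia.
Import ListNotations.

(* Generators a_{ts} and b_{ts}; only those with 1 <= s < t <= n occur in
   the defining relations. *)
Inductive gen : Type :=
| ga (t s : nat)
| gb (t s : nat).

Definition word := list gen.

Definition valid (n t s : nat) : Prop := 1 <= s /\ s < t /\ t <= n.

Definition farc (t s r q : nat) : Prop :=
  (0 < (Z.of_nat t - Z.of_nat r) * (Z.of_nat t - Z.of_nat q)
       * (Z.of_nat s - Z.of_nat r) * (Z.of_nat s - Z.of_nat q))%Z.

Inductive drel (n : nat) : word -> word -> Prop :=
| dr_aa t s r q : valid n t s -> valid n r q -> farc t s r q ->
    drel n [ga t s; ga r q] [ga r q; ga t s]
| dr_ab t s r q : valid n t s -> valid n r q -> farc t s r q ->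
    drel n [ga t s; gb r q] [gb r q; ga t s]
| dr_bb t s r q : valid n t s -> valid n r q -> farc t s r q ->
    drel n [gb t s; gb r q] [gb r q; gb t s]
| dr_tri1 r s t : 1 <= r -> r < s -> s < t -> t <= n ->
    drel n [ga t s; ga s r] [ga t r; ga t s]
| dr_tri2 r s t : 1 <= r -> r < s -> s < t -> t <= n ->
    drel n [ga t r; ga t s] [ga s r; ga t r]
| dr_ab_same t s : valid n t s ->
    drel n [ga t s; gb t s] [gb t s; ga t s]
| dr_ab1 r s t : 1 <= r -> r < s -> s < t -> t <= n ->
    drel n [ga t s; gb s r] [gb t r; ga t s]
| dr_ab2 r s t : 1 <= r -> r < s -> s < t -> t <= n ->
    drel n [ga s r; gb t r] [gb t s; ga s r]
| dr_ab3 r s t : 1 <= r -> r < s -> s < t -> t <= n ->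
    drel n [ga t r; gb t s] [gb s r; ga t r].

Inductive peq (n : nat) : word -> word -> Prop :=
| peq_refl u : peq n u u
| peq_sym u v : peq n u v -> peq n v u
| peq_trans u v w : peq n u v -> peq n v w -> peq n u w
| peq_step x u v y : drel n u v -> peq n (x ++ u ++ y) (x ++ v ++ y).

Fixpoint delta (k : nat) : word :=
  match k with
  | 0 => []
  | S k' => match k' with
            | 0 => []
            | S _ => ga k k' :: delta k'
            end
  end.

(* Main.v *)
Require Import Defs.
From Stdlib Require Import List Arith.
From Stdlib Require Import ZArith Lia.
Import ListNotations.

Lemma peq_ctx n u v x y : peq n u v -> peq n (x ++ u ++ y) (x ++ v ++ y).
Proof.
  intro H; revert x y; induction H; intros x0 y0.
  - apply peq_refl.
  - apply peq_sym; auto.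
  - eapply peq_trans; eauto.
  - rewrite !app_assoc, <- !(app_assoc (x0 ++ x)), <- !app_assoc.
    replace (x0 ++ x ++ u ++ y ++ y0) with ((x0 ++ x) ++ u ++ (y ++ y0))
      by (rewrite !app_assoc; reflexivity).
    replace (x0 ++ x ++ v ++ y ++ y0) with ((x0 ++ x) ++ v ++ (y ++ y0))
      by (rewrite !app_assoc; reflexivity).
    apply peq_step; auto.
Qed.

Lemma peq_cons n a u v : peq n u v -> peq n (a :: u) (a :: v).
Proof. intro H. apply (peq_ctx n u v [a] []) in H. now rewrite !app_nil_r in H. Qed.

Lemma peq_appl n x u v : peq n u v -> peq n (x ++ u) (x ++ v).
Proof. intro H. apply (peq_ctx n u v x []) in H. now rewrite !app_nil_r in H. Qed.

Lemma peq_appr n y u v : peq n u v -> peq n (u ++ y) (v ++ y).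
Proof. intro H. apply (peq_ctx n u v [] y) in H. exact H. Qed.

Lemma peq_d n u v : drel n u v -> peq n u v.
Proof. intro H. pose proof (peq_step n [] u v [] H) as H'. now rewrite !app_nil_r in H'. Qed.

Lemma peq_pair n a b c d y : peq n [a; b] [c; d] -> peq n (a :: b :: y) (c :: d :: y).
Proof. intro H. apply (peq_appr n y) in H. exact H. Qed.

Lemma farc_disj t s r q : 1 <= s -> s < t -> t < q -> q < r -> farc t s r q.
Proof.
  intros Ha Hb Hc' Hd. unfold farc.
  assert (H1 : (Z.of_nat t - Z.of_nat r < 0)%Z) by lia.
  assert (H2 : (Z.of_nat t - Z.of_nat q < 0)%Z) by lia.
  assert (H3 : (Z.of_nat s - Z.of_nat r < 0)%Z) by lia.
  assert (H4 : (Z.of_nat s - Z.of_nat q < 0)%Z) by lia.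
  apply Z.mul_neg_neg; auto.
  apply Z.mul_pos_neg; auto.
  apply Z.mul_neg_neg; auto.
Qed.

Section Gen.
Variable N : nat.
Variable c : nat -> nat -> gen.
Hypothesis Hc : c = ga \/ c = gb.

Lemma R0 t s : 1 <= s -> s < t -> t <= N -> peq N [c t s; ga t s] [ga t s; c t s].
Proof.
  intros. destruct Hc; subst. apply peq_refl.
  apply peq_sym, peq_d, dr_ab_same. unfold valid; lia.
Qed.

Lemma R1 r s t : 1 <= r -> r < s -> s < t -> t <= N ->
  peq N [c t s; ga s r] [ga s r; c t r].
Proof.
  intros. destruct Hc; subst.
  - eapply peq_trans. apply peq_d, dr_tri1; eauto. apply peq_d, dr_tri2; eauto.
  - apply peq_sym, peq_d, dr_ab2; auto.
Qed.

Lemma R2 r s t : 1 <= r -> r < s -> s < t -> t <= N ->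
  peq N [c t r; ga t s] [ga t s; c s r].
Proof.
  intros. destruct Hc; subst.
  - apply peq_sym, peq_d, dr_tri1; auto.
  - apply peq_sym, peq_d, dr_ab1; auto.
Qed.

Lemma R3 r s t : 1 <= r -> r < s -> s < t -> t <= N ->
  peq N [c s r; ga t r] [ga t r; c t s].
Proof.
  intros. destruct Hc; subst.
  - apply peq_sym, peq_d, dr_tri2; auto.
  - apply peq_sym, peq_d, dr_ab3; auto.
Qed.

Lemma Rc t s r q : valid N t s -> valid N r q -> farc t s r q ->
  peq N [c t s; ga r q] [ga r q; c t s].
Proof.
  intros. destruct Hc; subst.
  - apply peq_d, dr_aa; auto.
  - apply peq_sym, peq_d, dr_ab; auto.
    unfold farc in *. 
    replace ((Z.of_nat r - Z.of_nat t) * (Z.of_nat r - Z.of_nat s) * (Z.of_nat q - Z.of_nat t) * (Z.of_nat q - Z.of_nat s))%Z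
      with ((Z.of_nat t - Z.of_nat r) * (Z.of_nat t - Z.of_nat q) * (Z.of_nat s - Z.of_nat r) * (Z.of_nat s - Z.of_nat q))%Z by ring.
    auto.
Qed.

Fixpoint dch (k i : nat) : word :=
  match k with
  | 0 => []
  | S k' => ga (i + k) (i + k') :: dch k' i
  end.

Lemma delta_SS k : delta (S (S k)) = ga (S (S k)) (S k) :: delta (S k).
Proof. reflexivity. Qed.

Lemma delta_split s k : 1 <= s -> delta (s + k) = dch k s ++ delta s.
Proof.
  intro Hs. induction k. now rewrite Nat.add_0_r.
  simpl dch. cbn [app]. rewrite <- IHk.
  destruct s as [|s']; [lia|].
  replace (S s' + S k) with (S (S (s' + k))) by lia.
  rewrite delta_SS. f_equal; f_equal; lia.
Qed.

Lemma L1 m j : 1 <= j -> j < m -> m <= N ->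
  peq N (c m j :: delta j) (delta j ++ [c m 1]).
Proof.
  intros Hj. induction j as [|j IH]; [lia|].
  intros Hjm HmN. destruct j as [|j].
  - simpl. apply peq_refl.
  - rewrite delta_SS. simpl.
    eapply peq_trans. apply peq_pair, R1; lia.
    apply peq_cons. apply IH; lia.
Qed.

Lemma L2 s k : 1 <= s -> 1 <= k -> s + k <= N ->
  peq N (c (s + k) s :: dch k s) (dch k s ++ [c (s + 1) s]).
Proof.
  intros Hs Hk. induction k as [|k IH]; [lia|]. intros HN.
  destruct k as [|k].
  - simpl. rewrite Nat.add_0_r. apply R0; lia.
  - simpl dch. simpl app.
    eapply peq_trans. apply peq_pair, R2; lia.
    apply peq_cons. apply IH; lia.
Qed.

Lemma partB m s : 1 <= s -> s < m -> m <= N ->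
  peq N (c m s :: delta m) (delta m ++ [c (s + 1) 1]).
Proof.
  intros. replace m with (s + (m - s)) by lia.
  rewrite delta_split by lia.
  eapply peq_trans. apply (peq_appr N (delta s) (c (s + (m - s)) s :: dch (m - s) s)).
  apply L2; lia.
  rewrite <- !app_assoc. apply peq_appl. simpl.
  apply L1; lia.
Qed.

End Gen.

Lemma partA N c (Hc : c = ga \/ c = gb) m : m <= N -> forall t s, 1 <= s -> s < t -> t < m ->
  peq N (c t s :: delta m) (delta m ++ [c (t + 1) (s + 1)]).
Proof.
  induction m as [|m IH]; intros HmN t s Hs Hst Htm; [lia|].
  destruct m as [|m]; [lia|].
  assert (Hd : peq N (delta (S (S m))) (delta (S m) ++ [ga (S (S m)) 1])).
  { rewrite delta_SS. eapply (L1 N ga (or_introl eq_refl)); lia. }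
  destruct (Nat.eq_dec t (S m)) as [->|Hne].
  - eapply peq_trans. apply peq_cons, Hd.
    eapply peq_trans.
    apply (peq_appr N [ga (S (S m)) 1] (c (S m) s :: delta (S m))).
    apply partB; auto; lia.
    rewrite <- app_assoc. eapply peq_trans. 2: { apply peq_appr. apply peq_sym, Hd. }
    rewrite <- app_assoc. apply peq_appl. simpl.
    replace (S m + 1) with (S (S m)) by lia.
    try replace (S (m + 1)) with (S (S m)) by lia.
    apply R3; auto; lia.
  - rewrite delta_SS.
    eapply peq_trans. apply peq_pair, Rc; auto; unfold valid; try lia.
    apply farc_disj; lia.
    simpl. apply peq_cons. apply IH; lia.
Qed.

Theorem proposition4p2 (n : nat) (hn : 2 <= n) :
  (forall t s : nat, 1 <= s -> s < t -> t < n ->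
     peq n (ga t s :: delta n) (delta n ++ [ga (t + 1) (s + 1)]) /\
     peq n (gb t s :: delta n) (delta n ++ [gb (t + 1) (s + 1)])) /\
  (forall s : nat, 1 <= s -> s < n ->
     peq n (ga n s :: delta n) (delta n ++ [ga (s + 1) 1]) /\
     peq n (gb n s :: delta n) (delta n ++ [gb (s + 1) 1])).
Proof.
  split; intros; split.
  all: first [ apply partA; auto | apply partB; auto ].
Qed.
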